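(* For every OCAPT $\mathcal A=(Q,T,\delta,X)$ with initial state $q_0\in Q$ and target set $F\subseteq Q$ there is an alternating two-way automaton $\mathcal T$ over the alphabet $\Sigma=X\cup\{\square\}$ with $|\mathcal T|=|\mathcal A|^{\mathcal O(1)}$ such that for every parameter word $w\in W_X$: $w\in L(\mathcal T)$ if and only if all infinite $V_w$-runs of $\mathcal A$ starting from $(q_0,0)$ visit $F$ only finitely many times.
   Context: An OCAPT is $\mathcal A=(Q,T,\delta,X)$ with finite state set $Q$, finite parameter set $X$, transitions $T\subseteq Q\times Q$, and $\delta:T\to Op$ where $Op$ consists of updates $+a$ with $a\in\{-1,0,1\}$, the zero test $=0$, and parametric tests $=x$, $\ge x$; no parametric updates. For $V:X\to\mathbb{N}$, a $V$-run is a sequence of configurations $(q_i,c_i)\in Q\times\mathbb{N}$ with $(q_i,q_{i+1})\in T$, tests satisfied with unchanged counter, and updates applied. A parameter word is an infinite word $w=a_0a_1a_2\dots$ over $\Sigma=X\cup\{\square\}$ with $a_0=\square$ and such that each $x\in X$ occurs at exactly one position; $W_X$ is the set of parameter words. It determines $V_w(x)=$ the number of occurrences of $\square$ among $a_1\dots a_i$, where $a_i=x$. An alternating two-way automaton (A2A) is $\mathcal T=(S,\Sigma,s_{in},\Delta,S_f)$ with finite state set $S$, initial state $s_{in}$, accepting states $S_f\subseteq S$, and $\Delta\subseteq S\times(\Sigma\cup\{\mathrm{first?}\})\times\mathbb B^+(S\times\{+1,0,-1\})$, where $\mathbb B^+(Y)$ is the set of positive Boolean formulas over $Y$ (including true and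 false), and $Y'\subseteq Y$ satisfies $\beta$ if $\beta$ evaluates to true when elements of $Y'$ are set true and the rest false. A run tree on $w$ from $n$ is a rooted tree labelled by $S\times\mathbb{N}$ with root $(s_{in},n)$ such that for each vertex $(s,m)$ with children $(s_1,n_1),\dots,(s_k,n_k)$ there is $(s,\sigma,\beta)\in\Delta$ with $\{(s_1,n_1-m),\dots,(s_k,n_k-m)\}$ satisfying $\beta$, where $\sigma=\mathrm{first?}$ requires $m=0$ and $\sigma\in\Sigma$ requires $a_m=\sigma$. It is accepting if every infinite branch has infinitely many labels in $S_f\times\mathbb{N}$. $L(\mathcal T)$ is the set of infinite words having an accepting run tree from $0$. *)

(* Defs.v *)
From mathcomp Require Import all_boot.
Set Implicit Arguments. Unset Strict Implicit. Unset Printing Implicit Defensive.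

Inductive upd := UDec | UNop | UInc.

Inductive op (X : Type) :=
  | OAdd of upd
  | OZero
  | OEqP of X
  | OGeP of X.

Record ocapt (Q X : finType) := OCAPT {
  otrans : {set Q * Q};
  odelta : Q * Q -> op X           (* δ : T -> Op (only used on T) *)
}.

Definition ocapt_size (Q X : finType) (A : ocapt Q X) : nat :=
  #|Q| + #|otrans A| + #|X|.

Definition ostep (Q X : finType) (A : ocapt Q X) (V : X -> nat)
  (qc qc' : Q * nat) : Prop :=
  let: (q, c) := qc in let: (q', c') := qc' in
  (q, q') \in otrans A /\
  match odelta A (q, q') with
  | OAdd UDec => c' + 1 = c
  | OAdd UNop => c' = c
  | OAdd UInc => c' = c + 1
  | OZero => c = 0 /\ c' = c
  | OEqP x => c = V x /\ c' = c
  | OGeP x => V x <= c /\ c' = c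
  end.

Definition inf_run (Q X : finType) (A : ocapt Q X) (V : X -> nat)
  (q0 : Q) (r : nat -> Q * nat) : Prop :=
  r 0 = (q0, 0) /\ forall i, ostep A V (r i) (r i.+1).

Definition visits_finitely (Q : finType) (F : {set Q}) (r : nat -> Q * nat) : Prop :=
  exists N, forall i, N <= i -> (r i).1 \notin F.

(* alphabet Σ = X ∪ {□}, encoded as option X with None = □ *)
Definition pword (X : Type) := nat -> option X.

Definition is_param_word (X : finType) (w : pword X) : Prop :=
  w 0 = None /\ forall x : X, exists! i, w i = Some x.

Definition nboxes (X : Type) (w : pword X) (i : nat) : nat :=
  \sum_(1 <= j < i.+1) (if w j is None then 1 else 0).

Definition is_Vw (X : finType) (w : pword X) (V : X -> nat) : Prop :=
  forall x i, w i = Some x -> V x = nboxes w i.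

Inductive dir := DLeft | DStay | DRight.

Inductive bform (S : Type) :=
  | BTrue | BFalse
  | BAtom of S & dir
  | BAnd of bform S & bform S
  | BOr of bform S & bform S.

Fixpoint bform_size (S : Type) (f : bform S) : nat :=
  match f with
  | BTrue | BFalse | BAtom _ _ => 1
  | BAnd f g | BOr f g => (bform_size f + bform_size g).+1
  end.

Fixpoint bsat (S : Type) (P : S -> dir -> Prop) (f : bform S) : Prop :=
  match f with
  | BTrue => True
  | BFalse => False
  | BAtom s d => P s d
  | BAnd f g => bsat P f /\ bsat P g
  | BOr f g => bsat P f \/ bsat P g
  end.

(* transition labels: a letter of Σ, or the test first? *)
Inductive tlabel (X : Type) := TLetter of option X | TFirst.

Record a2a (S X : finType) := A2A {
  a_init  : S;
  a_delta : seq (S * tlabel X * bform S);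
  a_acc   : {set S}
}.

Definition a2a_size (S X : finType) (T : a2a S X) : nat :=
  #|S| + \sum_(t <- a_delta T) (bform_size t.2).+1.

Fixpoint InSeq (A : Type) (x : A) (s : seq A) : Prop :=
  match s with
  | [::] => False
  | y :: s' => y = x \/ InSeq x s'
  end.

Definition moved (m : nat) (d : dir) (n : nat) : Prop :=
  match d with
  | DLeft => n.+1 = m
  | DStay => n = m
  | DRight => n = m.+1
  end.

(* Run trees: nodes are finite sequences of child indices, stored in
   reverse order (child i of node v is i :: v); ar v is the number of
   children of v and lab v its label in S × ℕ. *)
Fixpoint valid_node (ar : seq nat -> nat) (v : seq nat) : bool :=
  match v with
  | [::] => true
  | i :: v' => (i < ar v') && valid_node ar v'
  end.

Definition label_ok (X : Type) (w : pword X) (m : nat) (l : tlabel X) : Prop :=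
  match l with
  | TLetter a => w m = a
  | TFirst => m = 0
  end.

Definition local_ok (S X : finType) (T : a2a S X) (w : pword X)
  (ar : seq nat -> nat) (lab : seq nat -> S * nat) (v : seq nat) : Prop :=
  let: (s, m) := lab v in
  exists2 t, InSeq t (a_delta T) &
    [/\ t.1.1 = s, label_ok w m t.1.2,
        forall i, i < ar v -> exists d, moved m d (lab (i :: v)).2
      & bsat (fun s' d => exists i, [/\ i < ar v, (lab (i :: v)).1 = s'
                                      & moved m d (lab (i :: v)).2]) t.2].

Fixpoint branch_pref (b : nat -> nat) (k : nat) : seq nat :=
  match k with
  | 0 => [::]
  | k'.+1 => b k' :: branch_pref b k'
  end.

Definition is_branch (ar : seq nat -> nat) (b : nat -> nat) : Prop :=
  forall k, b k < ar (branch_pref b k).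

Definition accepting_tree (S : finType) (acc : {set S})
  (ar : seq nat -> nat) (lab : seq nat -> S * nat) : Prop :=
  forall b, is_branch ar b ->
    forall N, exists2 k, N <= k & (lab (branch_pref b k)).1 \in acc.

Definition run_tree (S X : finType) (T : a2a S X) (w : pword X) (n : nat)
  (ar : seq nat -> nat) (lab : seq nat -> S * nat) : Prop :=
  lab [::] = (a_init T, n) /\ forall v, valid_node ar v -> local_ok T w ar lab v.

Definition a2a_accepts (S X : finType) (T : a2a S X) (w : pword X) : Prop :=
  exists ar lab, run_tree T w 0 ar lab /\ accepting_tree (a_acc T) ar lab.

(* Main.v *)
Require Import Defs.
From mathcomp Require Import all_boot zify.
From Stdlib Require Import Classical ClassicalEpsilon.
Set Implicit Arguments. Unset Strict Implicit. Unset Printing Implicit Defensive.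

Definition asb (P : Prop) : bool := if excluded_middle_informative P then true else false.
Lemma asbP (P : Prop) : reflect P (asb P).
Proof. rewrite /asb; case: excluded_middle_informative => h; by constructor. Qed.

Section Generic.
Variables (S X : finType) (T : a2a S X) (w : pword X).

Fixpoint dsat (R : S -> nat -> Prop) (m : nat) (f : bform S) : Prop :=
  match f with
  | BTrue => False | BFalse => True
  | BAtom s d => forall n, moved m d n -> R s n
  | BAnd f g => dsat R m f \/ dsat R m g
  | BOr f g => dsat R m f /\ dsat R m g end.

Definition Rule (R : S -> nat -> Prop) s m :=
  forall t, InSeq t (a_delta T) -> t.1.1 = s -> label_ok w m t.1.2 -> dsat R m t.2.

Definition Bad s m := forall R : S -> nat -> Prop, (forall s m, Rule R s m -> R s m) -> R s m.

Lemma dsat_mono (R R' : S -> nat -> Prop) m f :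
  (forall s n, R s n -> R' s n) -> dsat R m f -> dsat R' m f.
Proof.
move=> H; elim: f => //=.
- move=> s d h n mv; exact: H (h n mv).
- by move=> f IHf g IHg [h|h]; [left; apply IHf | right; apply IHg].
- by move=> f IHf g IHg [h1 h2]; split; [apply IHf | apply IHg].
Qed.

Lemma Bad_ind (R : S -> nat -> Prop) : (forall s m, Rule R s m -> R s m) -> forall s m, Bad s m -> R s m.
Proof. by move=> H s m B; apply B. Qed.

Lemma Bad_fold s m : Rule Bad s m -> Bad s m.
Proof.
move=> H R HR; apply HR => t Hin H1 H2.
apply: (dsat_mono _ (H t Hin H1 H2)) => s' n B; exact: B R HR.
Qed.

Lemma bsat_mono (P P' : S -> dir -> Prop) f : (forall s d, P s d -> P' s d) -> bsat P f -> bsat P' f.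
Proof.
move=> H; elim: f => //=.
- by move=> f IHf g IHg [h1 h2]; split; [apply IHf | apply IHg].
- by move=> f IHf g IHg [h|h]; [left; apply IHf | right; apply IHg].
Qed.

Lemma bsat_dsat (P : S -> dir -> Prop) R m f : bsat P f -> dsat R m f ->
  exists s d, P s d /\ (forall n, moved m d n -> R s n).
Proof.
elim: f => //=.
- move=> s d h1 h2; by exists s, d.
- move=> f IHf g IHg [h1 h2] [h|h]; [exact: IHf | exact: IHg].
- move=> f IHf g IHg [h|h] [h1 h2]; [exact: IHf | exact: IHg].
Qed.

Lemma not_dsat R m f : ~ dsat R m f -> bsat (fun s d => exists n, moved m d n /\ ~ R s n) f.
Proof.
elim: f => //=.
- move=> s d h. apply: NNPP => h2; apply: h => n mv. apply: NNPP => hr; apply: h2. by exists n.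
- move=> f IHf g IHg h; split; [apply IHf | apply IHg] => h'; apply h; by [left | right].
- move=> f IHf g IHg h. case: (classic (dsat R m f)) => hf.
  + right; apply IHg => hg; by apply h.
  + by left; apply IHf.
Qed.

Lemma tree_notBad n ar lab : run_tree T w n ar lab ->
  forall v, valid_node ar v -> ~ Bad (lab v).1 (lab v).2.
Proof.
move=> [_ Hrun] v Hv B.
pose R := fun s m => forall v, valid_node ar v -> lab v = (s, m) -> False.
suff HR0 : R (lab v).1 (lab v).2 by apply: (HR0 v Hv); case: (lab v).
apply: (Bad_ind _ B) => {B v Hv} s m HR v Hv Hlab.
have := Hrun v Hv; rewrite /local_ok Hlab; case=> t Hin [H1 H2 H3 H4].
have Hd := HR t Hin H1 H2.
have [s' [d [[i [Hi Hs Hmv]] HRs]]] := bsat_dsat H4 Hd.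
apply: (HRs _ Hmv (i :: v)); first by rewrite /= Hi Hv.
by rewrite -Hs; case: (lab (i :: v)).
Qed.

Definition Good s m := ~ Bad s m.

Definition cands (m : nat) : seq (S * nat) :=
  [seq (s, n) | s <- enum S, n <- (if m is m'.+1 then [:: m'; m; m.+1] else [:: m; m.+1])].
Definition chl (x : S * nat) := [seq y <- cands x.2 | asb (Good y.1 y.2)].
Fixpoint labf (v : seq nat) : S * nat :=
  match v with [::] => (a_init T, 0) | i :: v' => nth (a_init T, 0) (chl (labf v')) i end.
Definition arf v := size (chl (labf v)).

Lemma cands_mem m d n s : moved m d n -> (s, n) \in cands m.
Proof.
move=> mv; apply/allpairsP; exists (s, n) => /=; split => //; first by rewrite mem_enum.
case: d mv => /= mv; subst => //=; rewrite ?inE ?eqxx ?orbT //; case: m => //= m; by rewrite !inE eqxx ?orbT.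
Qed.


Lemma cands_moved m y : y \in cands m -> exists d, moved m d y.2.
Proof.
case/allpairsP => [[s n] [_ /= Hn ->]] /=.
case: m Hn => [|m]; rewrite !inE => /orP [/eqP ->|]; try (move=> /orP [/eqP ->|]).
all: try (move=> /eqP ->).
all: try by [exists DStay | exists DRight | exists DLeft].
Qed.

Lemma labf_good v : Good (a_init T) 0 -> valid_node arf v -> Good (labf v).1 (labf v).2.
Proof.
move=> G0; elim: v => //= i v IH /andP [Hi Hv].
have := mem_nth (a_init T, 0) Hi; rewrite mem_filter => /andP [/asbP h _]; exact: h.
Qed.

Theorem generic_accepts : a_acc T = setT -> (a2a_accepts T w <-> Good (a_init T) 0).
Proof.
move=> Hacc; split.
- case=> ar [lab [Hrt _]]; have := tree_notBad Hrt (v := [::]) erefl.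
  by rewrite (proj1 Hrt).
- move=> G0; exists arf, labf; split; last first.
    by move=> b _ N; exists N => //; rewrite Hacc inE.
  split => // v Hv; have := labf_good G0 Hv; rewrite /local_ok.
  case E: (labf v) => [s m] /= Gd.
  have : ~ Rule Bad s m by move=> h; apply: Gd; apply: Bad_fold.
  move=> /not_all_ex_not [t Ht].
  have [Hin Ht1] := imply_to_and _ _ Ht.
  have [H1 Ht2] := imply_to_and _ _ Ht1.
  have [H2 H3] := imply_to_and _ _ Ht2.
  exists t => //; split => //.
  + move=> i Hi; rewrite /arf ?E in Hi; have := mem_nth (a_init T, 0) Hi.
    rewrite mem_filter => /andP [_ /cands_moved [d hd]].
    by exists d; rewrite /= E.
  + apply: bsat_mono (not_dsat H3) => s' d [n [mv Gn]].
    have Hm : (s', n) \in chl (s, m) by rewrite mem_filter /=; apply/andP; split; [apply/asbP | apply: cands_mem mv].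
    exists (index (s', n) (chl (s, m))); rewrite /arf /= E index_mem nth_index //; split => //.
Qed.

End Generic.


Section Words.
Variables (X : finType) (w : pword X).

Definition bx (m : nat) : nat := if w m is None then 1 else 0.

Lemma nboxes0 : nboxes w 0 = 0.
Proof. by rewrite /nboxes big_geq. Qed.

Lemma nboxesS m : nboxes w m.+1 = nboxes w m + bx m.+1.
Proof. by rewrite /nboxes big_nat_recr. Qed.

Lemma nboxes_mono i j : i <= j -> nboxes w i <= nboxes w j.
Proof.
move=> /subnK <-; elim: (j - i) => [|k IH] //=; rewrite addSn nboxesS.
exact: leq_trans IH (leq_addr _ _).
Qed.

Lemma nboxes_box_lt i j : i < j -> w j = None -> nboxes w i < nboxes w j.
Proof.
case: j => // j Hij Hj; rewrite nboxesS /bx Hj addn1 ltnS; exact: nboxes_mono.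
Qed.

Lemma nboxes_some m y : w m.+1 = Some y -> nboxes w m.+1 = nboxes w m.
Proof. by move=> h; rewrite nboxesS /bx h addn0. Qed.

Lemma nboxes_none m : w m.+1 = None -> nboxes w m.+1 = (nboxes w m).+1.
Proof. by move=> h; rewrite nboxesS /bx h addn1. Qed.

Lemma nboxes_const i j : i <= j -> (forall k, i < k <= j -> w k <> None) -> nboxes w j = nboxes w i.
Proof.
move=> /subnK <-; elim: (j - i) => [|k IH] //= H.
rewrite addSn nboxesS IH; last by move=> k' /andP [h1 h2]; apply H; rewrite h1 /= (leq_trans h2) // leqnSn.
have : w (k + i).+1 <> None by apply: H; rewrite ltnS leq_addl leqnn.
by rewrite /bx; case: (w _) => // _ _; rewrite addn0.
Qed.

Definition lvlR m := if w m is None then nboxes w m else (nboxes w m).+1.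

Lemma lvlR_none m : w m = None -> lvlR m = nboxes w m.
Proof. by rewrite /lvlR => ->. Qed.

Lemma lvlR_succ m : w m = None -> lvlR m.+1 = (nboxes w m).+1.
Proof.
move=> _; rewrite /lvlR; case E: (w m.+1) => [y|].
- by rewrite (nboxes_some E).
- by rewrite (nboxes_none E).
Qed.

Lemma lvlR_some m y : w m = Some y -> lvlR m.+1 = lvlR m.
Proof.
move=> h; rewrite /lvlR h; case E: (w m.+1) => [y'|].
- by rewrite (nboxes_some E).
- by rewrite (nboxes_none E).
Qed.

Definition SemEq (x : X) m := exists i, [/\ m <= i, w i = Some x & forall j, m <= j <= i -> w j <> None].
Definition SemGe (x : X) m := exists i, i <= m /\ w i = Some x.

Hypothesis Hw : is_param_word w.
Variable V : X -> nat.
Hypothesis HV : is_Vw w V.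

Lemma w0 : w 0 = None. Proof. exact: Hw.1. Qed.

Lemma box_level0 m : w m = None -> nboxes w m = 0 -> m = 0.
Proof.
case: m => // m h; rewrite (nboxes_none h) //.
Qed.

Lemma nboxes_pred m : w m = None -> 0 < m -> nboxes w m = (nboxes w m.-1).+1.
Proof. by case: m => // m h _; rewrite (nboxes_none h). Qed.

Lemma some_pos m y : w m = Some y -> 0 < m.
Proof. by case: m => //; rewrite w0. Qed.

Lemma nboxes_pred_some m y : w m = Some y -> nboxes w m.-1 = nboxes w m.
Proof. case: m => [|m h]; first by rewrite w0. by rewrite (nboxes_some h). Qed.

Lemma pos_ex x : exists i, w i = Some x.
Proof. by have [i [h _]] := Hw.2 x; exists i. Qed.

Lemma pos_uniq x i j : w i = Some x -> w j = Some x -> i = j.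
Proof. move=> hi hj; have [k [_ u]] := Hw.2 x; by rewrite -(u i hi) -(u j hj). Qed.

Lemma next_box m : exists n, m <= n /\ w n = None.
Proof.
have : forall s : seq X, exists N, forall x, x \in s -> forall i, w i = Some x -> i < N.
  elim=> [|x s [N HN]]; first by exists 0.
  have [i hi] := pos_ex x; exists (maxn N i.+1) => y; rewrite inE => /orP [/eqP -> | hy] j hj.
  + by rewrite (pos_uniq hj hi) leq_max ltnSn orbT.
  + by rewrite leq_max (HN y hy j hj).
case/(_ (enum X)) => N HN; exists (maxn m N); rewrite leq_maxl; split => //.
case E: (w _) => [x|] //; have := HN x (mem_enum _ x) _ E; by rewrite ltnNge leq_maxr.
Qed.

Lemma testEq x m : w m = None -> (V x = nboxes w m <-> SemEq x m.+1).
Proof.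
move=> hm; split.
- have [i hi] := pos_ex x; rewrite (HV hi) => hl; exists i.
  have him : m < i.
    case: (ltngtP m i) => // h.
    + by have := nboxes_box_lt h hm; rewrite hl ltnn.
    + by move: hi; rewrite -h hm.
  split => // j /andP [h1 h2] hj.
  have := nboxes_mono h2; have := nboxes_box_lt h1 hj; rewrite -hl => a b.
  by have := leq_trans a b; rewrite ltnn.
- case=> i [h1 h2 h3]; rewrite (HV h2); apply: nboxes_const; first exact: ltnW.
  by move=> k hk; apply: h3.
Qed.

Lemma testGe x m : w m = None -> (V x <= nboxes w m <-> SemEq x m.+1 \/ SemGe x m).
Proof.
move=> hm; split.
- have [i hi] := pos_ex x; rewrite (HV hi) => hl.
  case: (leqP i m) => h; first by right; exists i.
  left; apply/(testEq _ hm); rewrite (HV hi); apply/eqP; rewrite eqn_leq hl /=; apply: nboxes_mono; exact: ltnW.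
- case.
  + by move/(testEq _ hm) => ->.
  + case=> i [h1 h2]; rewrite (HV h2); exact: nboxes_mono.
Qed.

Lemma thresh : exists K, 0 < K /\ forall x, V x < K.
Proof.
exists (\sum_(x : X) V x).+1; split => // x; rewrite ltnS (bigD1 x) //=; exact: leq_addr.
Qed.

End Words.


Section Ocapt.
Variables (Q X : finType) (A : ocapt Q X) (F : {set Q}) (V : X -> nat).

Definition mono (o : op X) : bool := match o with OAdd _ | OGeP _ => true | _ => false end.

Notation step := (ostep A V).

Inductive WU (b : bool) : Q -> Q -> bool -> nat -> Prop :=
 | WU_e q c : WU b q q false c
 | WU_s q q' p f f' c : step (q, c) (q', c) -> b ==> mono (odelta A (q, q')) ->
     f ==> (q' \in F) || f' -> WU b q' p f' c -> WU b q p f c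
 | WU_u q q1 q2 q3 p f f1 f2 c : step (q, c) (q1, c.+1) -> step (q2, c.+1) (q3, c) ->
     f ==> [|| q1 \in F, f1, q3 \in F | f2] -> WU b q1 q2 f1 c.+1 -> WU b q3 p f2 c -> WU b q p f c.

Inductive WM : Q -> Q -> bool -> nat -> Prop :=
 | WM_e q c : WM q q false c
 | WM_s q q' p f f' c : step (q, c) (q', c) -> mono (odelta A (q, q')) ->
     f ==> (q' \in F) || f' -> WM q' p f' c -> WM q p f c
 | WM_u q q1 q2 q3 p f f1 f2 c : step (q, c) (q1, c.+1) -> step (q2, c.+1) (q3, c) ->
     f ==> [|| q1 \in F, f1, q3 \in F | f2] -> WU true q1 q2 f1 c.+1 -> WM q3 p f2 c -> WM q p f c
 | WM_v q q1 p f f1 c : step (q, c) (q1, c.+1) -> f ==> (q1 \in F) || f1 ->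
     WM q1 p f1 c.+1 -> WM q p f c.

Inductive WR : Q -> nat -> Prop :=
 | WR_U q c : WU false q q true c -> WR q c
 | WR_M q c : WM q q true c -> WR q c
 | WR_step q q' c c' : step (q, c) (q', c') -> WR q' c' -> WR q c.

Lemma step_lvl q q' c c' : step (q, c) (q', c') -> [\/ c' = c, c' = c.+1 | c = c'.+1].
Proof.
case=> _; case: (odelta A (q, q')) => [[]| |x|x] /= => [h|h|h|[_ h]|[_ h]|[_ h]];
  [apply: Or33 | apply: Or31 | apply: Or32 | apply: Or31 | apply: Or31 | apply: Or31]; lia.
Qed.

Lemma step_inc q q' c : step (q, c) (q', c.+1) -> mono (odelta A (q, q')).
Proof. case=> _; case: (odelta A (q, q')) => [[]| |x|x] //= ; try lia. Qed.

Lemma step_dec q q' c : step (q, c.+1) (q', c) -> mono (odelta A (q, q')).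
Proof. case=> _; case: (odelta A (q, q')) => [[]| |x|x] //= ; try lia. Qed.

Definition shift d (x : Q * nat) := (x.1, x.2 + d).

Lemma step_shift q q' c c' d : step (q, c) (q', c') -> mono (odelta A (q, q')) || (d == 0) ->
  step (q, c + d) (q', c' + d).
Proof.
move=> hs /orP [hm|/eqP ->]; last by rewrite !addn0.
move: hs hm; rewrite /ostep /=; case: (odelta A (q, q')) => [[]| |x|x] //= [hT h] _; split => //; lia.
Qed.

Fixpoint chain (x : Q * nat) (l : seq (Q * nat)) : Prop :=
  match l with [::] => True | y :: l' => step x y /\ chain y l' end.

Lemma chain_cat x l1 l2 : chain x (l1 ++ l2) <-> chain x l1 /\ chain (last x l1) l2.
Proof.
elim: l1 x => [|y l1 IH] x /=; first by intuition.
rewrite IH; intuition.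
Qed.

Notation hasF l := (has (fun y => y.1 \in F) l).

Lemma WU_path b q p f c : WU b q p f c -> exists l,
  [/\ last (q, c) l = (p, c), f -> hasF l & forall d, b || (d == 0) -> chain (q, c + d) (map (shift d) l)].
Proof.
elim=> {q p f c}.
- move=> q c; exists [::]; split => //.
- move=> q q' p f f' c hs hm hf _ [l [h1 h2 h3]]; exists ((q', c) :: l); split => //=.
  + move=> fT; move: hf; rewrite fT /= => /orP [->|/h2 ->] //; by rewrite orbT.
  + move=> d hd; split; last exact: h3.
    apply: (step_shift hs); move: hm hd; case: (b) => /= [hm _|_ hd]; [by rewrite hm | by rewrite hd orbT].
- move=> q q1 q2 q3 p f f1 f2 c hs1 hs2 hf _ [l1 [a1 b1 c1]] _ [l2 [a2 b2 c2]].
  exists ((q1, c.+1) :: l1 ++ (q3, c) :: l2); split => /=.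
  + by rewrite last_cat /=.
  + move=> fT; move: hf; rewrite fT /= has_cat /= => /or4P [->|/b1 ->|->|/b2 ->] //; by rewrite ?orbT.
  + move=> d hd; rewrite map_cat chain_cat /=; split; first by apply: (step_shift hs1); rewrite (step_inc hs1).
    split; first exact: c1.
    rewrite last_map a1 /=; split; last exact: c2.
    by apply: (step_shift hs2); rewrite (step_dec hs2).
Qed.

Lemma WM_path q p f c : WM q p f c -> exists l c',
  [/\ last (q, c) l = (p, c'), c <= c', f -> hasF l & forall d, chain (q, c + d) (map (shift d) l)].
Proof.
elim=> {q p f c}.
- move=> q c; exists [::], c; split => //.
- move=> q q' p f f' c hs hm hf _ [l [c' [h1 h0 h2 h3]]]; exists ((q', c) :: l), c'; split => //=.
  + move=> fT; move: hf; rewrite fT /= => /orP [->|/h2 ->] //; by rewrite orbT.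
  + move=> d; split; last exact: h3.
    by apply: (step_shift hs); rewrite hm.
- move=> q q1 q2 q3 p f f1 f2 c hs1 hs2 hf hu _ [l2 [c' [a2 a0 b2 c2]]].
  have [l1 [a1 b1 c1]] := WU_path hu.
  exists ((q1, c.+1) :: l1 ++ (q3, c) :: l2), c'; split => //=.
  + by rewrite last_cat /=.
  + move=> fT; move: hf; rewrite fT /= has_cat /= => /or4P [->|/b1 ->|->|/b2 ->] //; by rewrite ?orbT.
  + move=> d; rewrite map_cat chain_cat /=; split; first by apply: (step_shift hs1); rewrite (step_inc hs1).
    split; first exact: c1.
    rewrite last_map a1 /=; split; last exact: c2.
    by apply: (step_shift hs2); rewrite (step_dec hs2).
- move=> q q1 p f f1 c hs hf _ [l [c' [a1 a0 b1 c1]]].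
  exists ((q1, c.+1) :: l), c'; split => //=.
  + exact: leq_trans (leqnSn _) a0.
  + move=> fT; move: hf; rewrite fT /= => /orP [->|/b1 ->] //; by rewrite orbT.
  + move=> d; split; last exact: c1.
    by apply: (step_shift hs); rewrite (step_inc hs).
Qed.


Definition run_from (x : Q * nat) (r : nat -> Q * nat) := r 0 = x /\ forall i, step (r i) (r i.+1).
Definition infF (r : nat -> Q * nat) := forall N, exists i, N <= i /\ (r i).1 \in F.

Lemma chain_nth z x l j : chain x l -> j < size l -> step (nth z (x :: l) j) (nth z (x :: l) j.+1).
Proof. elim: l x j => [|y l IH] x j //= [h1 h2]; case: j => [|j] hj /=; [exact: h1 | exact: IH]. Qed.

Lemma nth_size_last (z x : Q * nat) l : nth z (x :: l) (size l) = last x l.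
Proof. by elim: l x => [|y l IH] x //=. Qed.

Fixpoint pos (L i : nat) : nat * nat :=
  if i is i'.+1 then (let p := pos L i' in if p.2.+1 < L then (p.1, p.2.+1) else (p.1.+1, 0)) else (0, 0).

Lemma pos_lt L i : 0 < L -> (pos L i).2 < L.
Proof. move=> hL; elim: i => //= i IH; by case: ifP. Qed.

Lemma pos_mul L k j : j < L -> pos L (k * L + j) = (k, j).
Proof.
move=> hj; elim: k j hj => [|k IHk] j hj.
- elim: j hj => [|j IHj] hj //=; rewrite mul0n add0n in IHj *; rewrite IHj ?(ltnW hj) //= hj //.
- elim: j hj => [|j IHj] hj.
  + have hL : 0 < L by exact: leq_ltn_trans hj.
    have -> : k.+1 * L + 0 = (k * L + L.-1).+1 by rewrite mulSn; lia.
    rewrite /= IHk /=; last by rewrite ltn_predL.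
    by rewrite prednK // ltnn.
  + by rewrite addnS /= IHj ?(ltnW hj) //= hj.
Qed.

Lemma cycle_run q c l e : l != [::] -> last (q, c) l = (q, c + e) -> hasF l ->
  (forall k, chain (q, c + k * e) (map (shift (k * e)) l)) ->
  exists r, run_from (q, c) r /\ infF r.
Proof.
move=> hl hlast hF hch.
set L := size l; have hL : 0 < L by rewrite lt0n size_eq0.
pose x := (q, c).
pose r := fun i => shift ((pos L i).1 * e) (nth x (x :: l) (pos L i).2).
have key : forall k j, j < L -> step (shift (k * e) (nth x (x :: l) j)) (shift (k * e) (nth x (x :: l) j.+1)).
  move=> k j hj.
  have := chain_nth (shift (k * e) x) (hch k) (j := j); rewrite size_map => /(_ hj).
  have -> : (q, c + k * e) :: map (shift (k * e)) l = map (shift (k * e)) (x :: l) by [].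
  by rewrite !(nth_map x) //= ltnS // ltnW.
exists r; split; first split.
- by rewrite /r /= mul0n /shift /= addn0.
- move=> i; rewrite /r /=; have := pos_lt i hL; case: (pos L i) => k j /= hj.
  case: ifP => h /=; first exact: key.
  have hjL : j.+1 = L by apply/eqP; rewrite eqn_leq hj leqNgt h.
  have := key k j hj; rewrite hjL nth_size_last hlast.
  move=> H; have E2 : c + k.+1 * e = c + e + k * e by rewrite mulSn; lia.
  rewrite E2; move: H; rewrite /shift /=; exact.
- have [j0 [hj0 hF0]] : exists j0, j0 < L /\ (nth x (x :: l) j0).1 \in F.
    move: hF; case/hasP => y hy hyF; have := hy; rewrite -index_mem => hi0.
    have hny : nth x l (index y l) = y by rewrite nth_index.
    case: (ltnP (index y l).+1 L) => h1.
    + by exists (index y l).+1; split => //=; rewrite hny.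
    + exists 0; split => //=.
      have hlast' : y = last x l.
        rewrite -nth_last -hny; congr (nth _ _ _). move: hi0 h1; rewrite /L -subn1 => a b. have E3: (index y l).+1 = size l by apply/eqP; rewrite eqn_leq a b. by rewrite -E3 subn1.
      by move: hyF; rewrite hlast' hlast.
  move=> N; exists (N * L + j0); split; first by rewrite -{1}(muln1 N) (leq_trans (leq_mul (leqnn N) hL)) // leq_addr.
  by rewrite /r pos_mul.
Qed.

Lemma WR_run q c : WR q c -> exists r, run_from (q, c) r /\ infF r.
Proof.
elim=> {q c}.
- move=> q c hu; have [l [h1 h2 h3]] := WU_path hu.
  have hF := h2 erefl.
  have hl : l != [::] by case: l hF {h1 h2 h3}.
  apply: (cycle_run (e := 0) hl _ hF); [by rewrite addn0 | by move=> k; rewrite muln0; apply: h3].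
- move=> q c hm; have [l [c' [h1 h0 h2 h3]]] := WM_path hm.
  have hF := h2 erefl.
  have hl : l != [::] by case: l hF {h1 h2 h3}.
  apply: (cycle_run (e := c' - c) hl _ hF); [by rewrite subnKC | by move=> k; apply: h3].
- move=> q q' c c' hs _ [r [[h0 hr] hinf]].
  exists (fun i => if i is i'.+1 then r i' else (q, c)); split; first split => //.
  + by case => [|i] //=; rewrite h0.
  + move=> N; have [i [h1 h2]] := hinf N; exists i.+1; split => //; exact: leq_trans h1 (leqnSn _).
Qed.

Lemma fin_bound (T : eqType) (s : seq T) (P : T -> nat -> Prop) :
  (forall t, t \in s -> exists N, forall i, N <= i -> P t i) ->
  exists N, forall i, N <= i -> forall t, t \in s -> P t i.
Proof.
elim: s => [|t s IH] H; first by exists 0.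
have [N1 h1] := H t (mem_head _ _).
have [N2 h2] := IH (fun t' ht' => H t' (ltac:(by rewrite inE ht' orbT))).
exists (maxn N1 N2) => i hi t'; rewrite inE => /orP [/eqP ->|ht'].
- apply: h1; exact: leq_trans (leq_maxl _ _) hi.
- apply: h2 => //; exact: leq_trans (leq_maxr _ _) hi.
Qed.

Lemma thresh0 : exists K, 0 < K /\ forall x, V x < K.
Proof.
exists (\sum_(x : X) V x).+1; split => // x; rewrite ltnS (bigD1 x) //=; exact: leq_addr.
Qed.

Lemma step_mono_high q q' c c' : step (q, c) (q', c') -> (forall x, V x < c) -> 0 < c ->
  mono (odelta A (q, q')).
Proof.
rewrite /ostep /=; case: (odelta A (q, q')) => [[]| |x|x] //= [_ h] hV hc.
- lia.
- have := hV x; lia.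
Qed.

Section Run.
Variable r : nat -> Q * nat.
Hypothesis Hr : forall i, step (r i) (r i.+1).

Lemma stepr i c c' : (r i).2 = c -> (r i.+1).2 = c' -> step ((r i).1, c) ((r i.+1).1, c').
Proof. by move=> <- <-; rewrite -!surjective_pairing. Qed.

Lemma lvl_next i : [\/ (r i.+1).2 = (r i).2, (r i.+1).2 = (r i).2.+1 | (r i).2 = (r i.+1).2.+1].
Proof. have := Hr i; rewrite [r i]surjective_pairing [r i.+1]surjective_pairing; exact: step_lvl. Qed.

Lemma segU (b : bool) n : forall c i (f : bool), (forall k, i <= k <= i + n -> c <= (r k).2) -> (r i).2 = c -> (r (i + n)).2 = c ->
  (b -> forall k, i <= k < i + n -> mono (odelta A ((r k).1, (r k.+1).1))) ->
  (f -> exists k, i < k <= i + n /\ (r k).1 \in F) -> WU b (r i).1 (r (i + n)).1 f c.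
Proof.
elim/ltn_ind: n => n IH c i f hb hi hn hm hf.
case: n IH hb hn hm hf => [|n] IH hb hn hm hf.
- case: f hf => [hf|_]; first by have [k hk] := hf erefl; lia.
  rewrite addn0; exact: WU_e.
have hc1 : c <= (r i.+1).2 by apply: hb; lia.
case: (lvl_next i); rewrite hi => hl; last by lia.
-
  apply: (WU_s (q' := (r i.+1).1) (f' := asb (exists k, i.+1 < k <= i + n.+1 /\ (r k).1 \in F))).
  + by apply: stepr; rewrite // hl.
  + by apply/implyP => hb'; apply: hm => //; lia.
  + apply/implyP => fT; have [k [hk hkF]] := hf fT.
    case: (ltngtP k i.+1) => hk2; first lia.
    * by apply/orP; right; apply/asbP; exists k; split => //; lia.
    * by rewrite -hk2 hkF.
  + have -> : i + n.+1 = i.+1 + n by lia.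
    have hb' : forall k, i.+1 <= k <= i.+1 + n -> c <= (r k).2 by move=> k hk; apply: hb; lia.
    have hi' : (r i.+1).2 = c by rewrite hl.
    have hn' : (r (i.+1 + n)).2 = c by rewrite addSnnS.
    have hm' : b -> forall k, i.+1 <= k < i.+1 + n -> mono (odelta A ((r k).1, (r k.+1).1)).
      by move=> hb0 k hk; apply: hm => //; lia.
    apply: (IH n (ltnSn n) c i.+1 _ hb' hi' hn' hm').
    by move/asbP => [k hk]; exists k.
-
  pose P k := (k <= n) && ((r (i.+1 + k)).2 == c).
  have exP : exists k, P k by exists n; rewrite /P leqnn /= addSnnS hn.
  case: (ex_minnP exP) => k0 /andP [hk0n /eqP hk0] hmin.
  have hk0p : 0 < k0 by case: k0 hk0 {hk0n hmin} => //; rewrite addn0 hl; lia.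
  set j := i.+1 + k0.
  have hmid : forall k, i < k < j -> c.+1 <= (r k).2.
    move=> k hk; have := hb k; rewrite ltn_neqAle => -> ; last by lia.
    rewrite andbT; apply/eqP => e.
    have := hmin (k - i.+1); rewrite /P e.
    have -> : i.+1 + (k - i.+1) = k by lia.
    rewrite eqxx andbT; case: (leqP (k - i.+1) n) => h; last by lia.
    by move=> /(_ erefl); lia.
  have hj1 : (r j.-1).2 = c.+1.
    have := hmid j.-1; have := lvl_next j.-1; rewrite prednK; last by lia.
    rewrite hk0 => h1 h2; have h3 := h2 ltac:(lia); case: h1; lia.
  apply: (WU_u (q1 := (r i.+1).1) (q2 := (r j.-1).1) (q3 := (r j).1)
            (f1 := asb (exists k, i.+1 < k <= j.-1 /\ (r k).1 \in F))
            (f2 := asb (exists k, j < k <= i + n.+1 /\ (r k).1 \in F))).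
  + by apply: stepr; rewrite // hl.
  + have := stepr hj1 (c' := c); rewrite prednK; last by lia. by apply.
  + apply/implyP => fT; have [k [hk hkF]] := hf fT.
    case: (ltngtP k i.+1) => hk2; first lia; last by rewrite -hk2 hkF.
    case: (ltngtP k j) => hk3; last by rewrite -hk3 hkF !orbT.
    * by rewrite (_ : asb _ = true) ?orbT //; apply/asbP; exists k; split => //; lia.
    * by rewrite (_ : asb (exists k, j < k <= i + n.+1 /\ _) = true) ?orbT //; apply/asbP; exists k; split => //; lia.
  + have -> : j.-1 = i.+1 + (k0.-1) by lia.
    have hb' : forall k, i.+1 <= k <= i.+1 + k0.-1 -> c.+1 <= (r k).2 by move=> k hk; apply: hmid; lia.
    have hi' : (r i.+1).2 = c.+1 by rewrite hl.
    have hn' : (r (i.+1 + k0.-1)).2 = c.+1 by rewrite (_ : i.+1 + k0.-1 = j.-1) //; lia.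
    have hm' : b -> forall k, i.+1 <= k < i.+1 + k0.-1 -> mono (odelta A ((r k).1, (r k.+1).1)).
      by move=> hb0 k hk; apply: hm => //; lia.
    apply: (IH k0.-1 ltac:(lia) c.+1 i.+1 _ hb' hi' hn' hm').
    by move/asbP => [k hk]; exists k; split; [lia | case: hk].
  + have -> : i + n.+1 = j + (i + n.+1 - j) by lia.
    have hb' : forall k, j <= k <= j + (i + n.+1 - j) -> c <= (r k).2 by move=> k hk; apply: hb; lia.
    have hn' : (r (j + (i + n.+1 - j))).2 = c by rewrite (_ : j + (i + n.+1 - j) = i + n.+1) //; lia.
    have hm' : b -> forall k, j <= k < j + (i + n.+1 - j) -> mono (odelta A ((r k).1, (r k.+1).1)).
      by move=> hb0 k hk; apply: hm => //; lia.
    apply: (IH (i + n.+1 - j) ltac:(lia) c j _ hb' hk0 hn' hm').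
    by move/asbP => [k hk]; exists k; split; [lia | case: hk].
Qed.

Lemma segM n : forall c i (f : bool), (forall k, i <= k <= i + n -> c <= (r k).2) -> (r i).2 = c ->
  (forall k, i <= k < i + n -> mono (odelta A ((r k).1, (r k.+1).1))) ->
  (f -> exists k, i < k <= i + n /\ (r k).1 \in F) -> WM (r i).1 (r (i + n)).1 f c.
Proof.
elim/ltn_ind: n => n IH c i f hb hi hm hf.
case: n IH hb hm hf => [|n] IH hb hm hf.
- case: f hf => [hf|_]; first by have [k hk] := hf erefl; lia.
  rewrite addn0; exact: WM_e.
have hc1 : c <= (r i.+1).2 by apply: hb; lia.
case: (lvl_next i); rewrite hi => hl; last by lia.
-
  apply: (WM_s (q' := (r i.+1).1) (f' := asb (exists k, i.+1 < k <= i + n.+1 /\ (r k).1 \in F))).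
  + by apply: stepr; rewrite // hl.
  + by apply: hm; lia.
  + apply/implyP => fT; have [k [hk hkF]] := hf fT.
    case: (ltngtP k i.+1) => hk2; first lia.
    * by apply/orP; right; apply/asbP; exists k; split => //; lia.
    * by rewrite -hk2 hkF.
  + have -> : i + n.+1 = i.+1 + n by lia.
    have hb' : forall k, i.+1 <= k <= i.+1 + n -> c <= (r k).2 by move=> k hk; apply: hb; lia.
    have hi' : (r i.+1).2 = c by rewrite hl.
    have hm' : forall k, i.+1 <= k < i.+1 + n -> mono (odelta A ((r k).1, (r k.+1).1)).
      by move=> k hk; apply: hm => //; lia.
    apply: (IH n (ltnSn n) c i.+1 _ hb' hi' hm').
    by move/asbP => [k hk]; exists k.
-
  case: (classic (exists k, k <= n /\ (r (i.+1 + k)).2 = c)) => [[kk [hkk1 hkk2]]|hno].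
  + pose P k := (k <= n) && ((r (i.+1 + k)).2 == c).
    have exP : exists k, P k by exists kk; rewrite /P hkk1 hkk2 eqxx.
    case: (ex_minnP exP) => k0 /andP [hk0n /eqP hk0] hmin.
    have hk0p : 0 < k0 by case: k0 hk0 {hk0n hmin} => //; rewrite addn0 hl; lia.
    set j := i.+1 + k0.
    have hmid : forall k, i < k < j -> c.+1 <= (r k).2.
      move=> k hk; have := hb k; rewrite ltn_neqAle => -> ; last by lia.
      rewrite andbT; apply/eqP => e.
      have := hmin (k - i.+1); rewrite /P e.
      have -> : i.+1 + (k - i.+1) = k by lia.
      rewrite eqxx andbT; case: (leqP (k - i.+1) n) => h; last by lia.
      by move=> /(_ erefl); lia.
    have hj1 : (r j.-1).2 = c.+1.
      have := hmid j.-1; have := lvl_next j.-1; rewrite prednK; last by lia.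
      rewrite hk0 => h1 h2; have h3 := h2 ltac:(lia); case: h1; lia.
    apply: (WM_u (q1 := (r i.+1).1) (q2 := (r j.-1).1) (q3 := (r j).1)
              (f1 := asb (exists k, i.+1 < k <= j.-1 /\ (r k).1 \in F))
              (f2 := asb (exists k, j < k <= i + n.+1 /\ (r k).1 \in F))).
    * by apply: stepr; rewrite // hl.
    * have := stepr hj1 (c' := c); rewrite prednK; last by lia. by apply.
    * apply/implyP => fT; have [k [hk hkF]] := hf fT.
      case: (ltngtP k i.+1) => hk2; first lia; last by rewrite -hk2 hkF.
      case: (ltngtP k j) => hk3; last by rewrite -hk3 hkF !orbT.
      -- by rewrite (_ : asb _ = true) ?orbT //; apply/asbP; exists k; split => //; lia.
      -- by rewrite (_ : asb (exists k, j < k <= i + n.+1 /\ _) = true) ?orbT //; apply/asbP; exists k; split => //; lia.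
    * have -> : j.-1 = i.+1 + (k0.-1) by lia.
      have hb' : forall k, i.+1 <= k <= i.+1 + k0.-1 -> c.+1 <= (r k).2 by move=> k hk; apply: hmid; lia.
      have hi' : (r i.+1).2 = c.+1 by rewrite hl.
      have hn' : (r (i.+1 + k0.-1)).2 = c.+1 by rewrite (_ : i.+1 + k0.-1 = j.-1) //; lia.
      have hm' : true -> forall k, i.+1 <= k < i.+1 + k0.-1 -> mono (odelta A ((r k).1, (r k.+1).1)).
        by move=> hb0 k hk; apply: hm => //; lia.
      apply: (@segU true k0.-1 c.+1 i.+1 _ hb' hi' hn' hm').
      by move/asbP => [k hk]; exists k; split; [lia | case: hk].
    * have -> : i + n.+1 = j + (i + n.+1 - j) by lia.
      have hb' : forall k, j <= k <= j + (i + n.+1 - j) -> c <= (r k).2 by move=> k hk; apply: hb; lia.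
      have hm' : forall k, j <= k < j + (i + n.+1 - j) -> mono (odelta A ((r k).1, (r k.+1).1)).
        by move=> k hk; apply: hm => //; lia.
      apply: (IH (i + n.+1 - j) ltac:(lia) c j _ hb' hk0 hm').
      by move/asbP => [k hk]; exists k; split; [lia | case: hk].
  + apply: (WM_v (q1 := (r i.+1).1) (f1 := asb (exists k, i.+1 < k <= i + n.+1 /\ (r k).1 \in F))).
    * by apply: stepr; rewrite // hl.
    * apply/implyP => fT; have [k [hk hkF]] := hf fT.
      case: (ltngtP k i.+1) => hk2; first lia.
      -- by apply/orP; right; apply/asbP; exists k; split => //; lia.
      -- by rewrite -hk2 hkF.
    * have -> : i + n.+1 = i.+1 + n by lia.
      have hb' : forall k, i.+1 <= k <= i.+1 + n -> c.+1 <= (r k).2.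
        move=> k hk; have := hb k; rewrite ltn_neqAle => -> ; last by lia.
        rewrite andbT; apply/eqP => e; apply: hno; exists (k - i.+1); split; first lia.
        by rewrite (_ : i.+1 + (k - i.+1) = k) //; lia.
      have hi' : (r i.+1).2 = c.+1 by rewrite hl.
      have hm' : forall k, i.+1 <= k < i.+1 + n -> mono (odelta A ((r k).1, (r k.+1).1)).
        by move=> k hk; apply: hm => //; lia.
      apply: (IH n (ltnSn n) c.+1 i.+1 _ hb' hi' hm').
      by move/asbP => [k hk]; exists k.
Qed.

End Run.


Lemma buchi_WR q0 r : run_from (q0, 0) r -> infF r -> WR q0 0.
Proof.
move=> [h0 Hr] hinf.
have pref : forall i, WR (r i).1 (r i).2 -> WR q0 0.
  suff H : forall n j, WR (r (j + n)).1 (r (j + n)).2 -> WR (r j).1 (r j).2.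
    by move=> i hw; have := H i 0; rewrite add0n h0 /=; apply.
  elim=> [|n IH] j; first by rewrite addn0.
  rewrite addnS -addSn => /IH h; apply: (WR_step _ h); rewrite -!surjective_pairing; exact: Hr.
have pigeon : forall Pr : nat -> Prop, (forall N, exists i, N <= i /\ Pr i) ->
   exists q, forall N, exists i, N <= i /\ Pr i /\ (r i).1 = q.
  move=> Pr HP; apply: NNPP => hno.
  have : forall q, q \in enum Q -> exists N, forall i, N <= i -> Pr i -> (r i).1 <> q.
    move=> q _; apply: NNPP => h1; apply: hno; exists q => N; apply: NNPP => h2; apply: h1.
    by exists N => i hi hp he; apply: h2; exists i.
  move/fin_bound => [N HN]; have [i [hi hp]] := HP N.
  exact: HN i hi (r i).1 (mem_enum _ _) hp erefl.
case: (classic (exists L, forall N, exists i, N <= i /\ (r i).2 = L)) => [exL|noL].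
- pose PL L := asb (forall N, exists i, N <= i /\ (r i).2 = L).
  have exPL : exists L, PL L by case: exL => L h; exists L; apply/asbP.
  case: (ex_minnP exPL) => L /asbP hL hmin.
  have : forall l, l \in iota 0 L -> exists N, forall i, N <= i -> (r i).2 <> l.
    move=> l; rewrite mem_iota add0n => /andP [_ hl]; apply: NNPP => h1.
    have : PL l.
      apply/asbP => N; apply: NNPP => h2; apply: h1; exists N => i hi he; apply: h2; by exists i.
    move/hmin; lia.
  move/fin_bound => [N0 HN0].
  have hge : forall i, N0 <= i -> L <= (r i).2.
    move=> i hi; rewrite leqNgt; apply/negP => hlt; apply: (HN0 i hi (r i).2) => //; by rewrite mem_iota.
  have [q Hq] := pigeon (fun i => N0 <= i /\ (r i).2 = L)
    (fun N => let: ex_intro i (conj h1 h2) := hL (maxn N N0) in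
       ex_intro _ i (conj (leq_trans (leq_maxl _ _) h1) (conj (leq_trans (leq_maxr _ _) h1) h2))).
  have [i [_ [[hi1 hi2] hi3]]] := Hq 0.
  have [k [hk hkF]] := hinf i.+1.
  have [j [hj [[hj1 hj2] hj3]]] := Hq k.
  have hu := @segU r Hr false (j - i) L i true.
  have e : i + (j - i) = j by lia.
  rewrite e hi3 hj3 in hu.
  apply: (pref i); rewrite hi3 hi2; apply: WR_U; apply: hu => //.
  + move=> k' hk'; apply: hge; lia.
  + by move=> _; exists k; split => //; lia.
- have noL' : forall L, exists N, forall i, N <= i -> (r i).2 <> L.
    move=> L; apply: NNPP => h1; apply: noL; exists L => N; apply: NNPP => h2; apply: h1.
    by exists N => i hi he; apply: h2; exists i.
  have [K [hK0 hK]] := thresh0.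
  have : forall l, l \in iota 0 K -> exists N, forall i, N <= i -> (r i).2 <> l by move=> l _; apply: noL'.
  move/fin_bound => [N0 HN0].
  have hge : forall i, N0 <= i -> K <= (r i).2.
    move=> i hi; rewrite leqNgt; apply/negP => hlt; apply: (HN0 i hi (r i).2) => //; by rewrite mem_iota.
  pose rec t := forall s, t <= s -> (r t).2 <= (r s).2.
  have recs : forall N, exists t, N <= t /\ rec t.
    move=> N; pose Pv v := asb (exists s, N <= s /\ (r s).2 = v).
    have exv : exists v, Pv v by exists (r N).2; apply/asbP; exists N.
    case: (ex_minnP exv) => v /asbP [s [hs1 hs2]] hmin.
    exists s; split => // s' hs'; rewrite hs2; apply: hmin; apply/asbP; exists s'; split => //; lia.
  have [q Hq] := pigeon (fun t => N0 <= t /\ rec t)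
    (fun N => let: ex_intro t (conj h1 h2) := recs (maxn N N0) in
       ex_intro _ t (conj (leq_trans (leq_maxl _ _) h1) (conj (leq_trans (leq_maxr _ _) h1) h2))).
  have [i [_ [[hi1 hi2] hi3]]] := Hq 0.
  have [k [hk hkF]] := hinf i.+1.
  have [j [hj [[hj1 hj2] hj3]]] := Hq k.
  have hu := @segM r Hr (j - i) (r i).2 i true.
  have e : i + (j - i) = j by lia.
  rewrite e hi3 hj3 in hu.
  apply: (pref i); rewrite hi3; apply: WR_M; apply: hu => //.
  + move=> k' hk'; apply: hi2; lia.
  + move=> k' hk'; have := Hr k'; rewrite [r k']surjective_pairing [r k'.+1]surjective_pairing.
    move/step_mono_high; apply.
    * move=> x; apply: leq_trans (hK x) _; apply: hge; lia.
    * apply: leq_trans hK0 _; apply: hge; lia.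
  + by move=> _; exists k; split => //; lia.
Qed.

End Ocapt.

Module Aut.

Section AutS.
Variables (Q X : finType) (A : ocapt Q X) (q0 : Q) (F : {set Q}).

Definition K := (Q + (Q * Q * bool * bool) + (Q * Q * bool))%type.
Definition kR q : K := inl (inl q).
Definition kU q p f b : K := inl (inr (q, p, f, b)).
Definition kM q p f : K := inr (q, p, f).
Definition S := ((K * bool) + (X + X) + unit)%type.
Definition sC (k : K) (md : bool) : S := inl (inl (k, md)).
Definition sEq x : S := inl (inr (inl x)).
Definition sGe x : S := inl (inr (inr x)).
Definition sTr : S := inr tt.

Definition NS := #|{: S}|.
Definition enc (s : S) : 'I_NS := enum_rank s.
Definition dec (i : 'I_NS) : S := enum_val i.
Lemma decK s : dec (enc s) = s. Proof. exact: enum_rankK. Qed.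

Definition at_ (s : S) d : bform 'I_NS := BAtom (enc s) d.
Definition bigAndF (I : finType) (g : I -> bform 'I_NS) := foldr (@BAnd _) (@BTrue _) [seq g i | i <- enum I].

Definition isInc (o : op X) := if o is OAdd UInc then true else false.
Definition isDec (o : op X) := if o is OAdd UDec then true else false.
Definition stay_allowed (z : bool) (o : op X) :=
  match o with OAdd UNop => true | OZero => z | OEqP _ | OGeP _ => true | _ => false end.
Definition tpart (o : op X) : bform 'I_NS :=
  match o with
  | OEqP x => at_ (sEq x) DRight
  | OGeP x => BAnd (at_ (sEq x) DRight) (at_ (sGe x) DStay)
  | _ => BFalse _ end.

Notation dl q q' := (odelta A (q, q')).
Notation inT q q' := ((q, q') \in otrans A).

Definition Ue (q p : Q) (f : bool) : bform 'I_NS := if (q == p) && ~~ f then BFalse _ else BTrue _.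

Definition UstayF (z : bool) (q p : Q) (f b : bool) : bform 'I_NS := bigAndF (fun t : Q * bool =>
  if [&& inT q t.1, stay_allowed z (dl q t.1), b ==> mono (dl q t.1) & f ==> (t.1 \in F) || t.2]
  then BOr (tpart (dl q t.1)) (at_ (sC (kU t.1 p t.2 b) true) DStay) else BTrue _).

Definition Ucond (q p : Q) (f : bool) (t : Q * Q * Q * bool * bool) :=
  let: (q1, q2, q3, f1, f2) := t in
  [&& inT q q1, isInc (dl q q1), inT q2 q3, isDec (dl q2 q3) & f ==> [|| q1 \in F, f1, q3 \in F | f2]].

Definition UupF (q p : Q) (f b : bool) : bform 'I_NS := bigAndF (fun t : Q * Q * Q * bool * bool =>
  let: (q1, q2, q3, f1, f2) := t in
  if Ucond q p f t
  then BOr (at_ (sC (kU q1 q2 f1 b) true) DRight) (at_ (sC (kU q3 p f2 b) true) DStay) else BTrue _).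

Definition MstayF (z : bool) (q p : Q) (f : bool) : bform 'I_NS := bigAndF (fun t : Q * bool =>
  if [&& inT q t.1, stay_allowed z (dl q t.1), mono (dl q t.1) & f ==> (t.1 \in F) || t.2]
  then BOr (tpart (dl q t.1)) (at_ (sC (kM t.1 p t.2) true) DStay) else BTrue _).

Definition MupF (q p : Q) (f : bool) : bform 'I_NS := bigAndF (fun t : Q * Q * Q * bool * bool =>
  let: (q1, q2, q3, f1, f2) := t in
  if Ucond q p f t
  then BOr (at_ (sC (kU q1 q2 f1 true) true) DRight) (at_ (sC (kM q3 p f2) true) DStay) else BTrue _).

Definition MvF (q p : Q) (f : bool) : bform 'I_NS := bigAndF (fun t : Q * bool =>
  if [&& inT q t.1, isInc (dl q t.1) & f ==> (t.1 \in F) || t.2]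
  then at_ (sC (kM t.1 p t.2) true) DRight else BTrue _).

Definition RstepF (z : bool) (q : Q) : bform 'I_NS := bigAndF (fun q' : Q =>
  if inT q q' then
    (if isInc (dl q q') then at_ (sC (kR q') true) DRight
     else if isDec (dl q q') then (if z then BTrue _ else at_ (sC (kR q') false) DLeft)
     else if stay_allowed z (dl q q') then BOr (tpart (dl q q')) (at_ (sC (kR q') true) DStay)
     else BTrue _)
  else BTrue _).

Definition BoxF (k : K) (z : bool) : bform 'I_NS :=
  match k with
  | inl (inl q) => BAnd (at_ (sC (kU q q true false) true) DStay)
                     (BAnd (at_ (sC (kM q q true) true) DStay) (RstepF z q))
  | inl (inr (q, p, f, b)) => BAnd (Ue q p f) (BAnd (UstayF z q p f b) (UupF q p f b))
  | inr (q, p, f) => BAnd (Ue q p f) (BAnd (MstayF z q p f) (BAnd (MupF q p f) (MvF q p f)))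
  end.

Definition fmlS (s : S) (l : tlabel X) : bform 'I_NS :=
  match s with
  | inl (inl (k, md)) =>
      match l with
      | TFirst => BoxF k true
      | TLetter None => BAnd (at_ sTr DLeft) (BoxF k false)
      | TLetter (Some _) => if md then at_ s DRight else at_ s DLeft
      end
  | inl (inr (inl x)) =>
      match l with
      | TFirst => BFalse _
      | TLetter None => BTrue _
      | TLetter (Some y) => if y == x then BFalse _ else at_ s DRight
      end
  | inl (inr (inr x)) =>
      match l with
      | TFirst => BTrue _
      | TLetter None => at_ s DLeft
      | TLetter (Some y) => if y == x then BFalse _ else at_ s DLeft
      end
  | inr _ => BTrue _
  end.

Definition labels : seq (tlabel X) := @TFirst X :: TLetter None :: [seq TLetter (Some x) | x <- enum X].

Definition delta : seq ('I_NS * tlabel X * bform 'I_NS) :=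
  flatten [seq [seq (i, l, fmlS (dec i) l) | l <- labels] | i <- enum 'I_NS].

Definition TA : a2a 'I_NS X := A2A (enc (sC (kR q0) true)) delta setT.

End AutS.

Lemma InSeq_cat (T : Type) (x : T) s1 s2 : InSeq x (s1 ++ s2) <-> InSeq x s1 \/ InSeq x s2.
Proof. elim: s1 => [|y s1 IH] /=; [tauto | rewrite IH; tauto]. Qed.

Lemma InSeq_map (T U : Type) (f : T -> U) x s : InSeq x (map f s) <-> exists y, InSeq y s /\ f y = x.
Proof.
elim: s => [|y s IH] /=; first by split => // [[y []]].
rewrite IH; split.
- case=> [<-|[z [h1 h2]]]; [by exists y; split; [left|] | by exists z; split; [right|]].
- case=> z [[<-|h] h2]; [by left | by right; exists z].
Qed.

Lemma InSeq_flatten (T : Type) (x : T) ss : InSeq x (flatten ss) <-> exists s, InSeq s ss /\ InSeq x s.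
Proof.
elim: ss => [|s ss IH] /=; first by split => // [[s []]].
rewrite InSeq_cat IH; split.
- case=> [h|[s' [h1 h2]]]; [by exists s; split; [left|] | by exists s'; split; [right|]].
- case=> s' [[<-|h] h2]; [by left | by right; exists s'].
Qed.

Lemma InSeq_mem (T : eqType) (x : T) s : InSeq x s <-> x \in s.
Proof.
elim: s => [|y s IH] //=; rewrite inE IH; split.
- by case=> [->|->]; rewrite ?eqxx ?orbT.
- by case/orP => [/eqP ->|h]; [left | right].
Qed.

Section Sem.
Variables (Q X : finType) (A : ocapt Q X) (q0 : Q) (F : {set Q}) (w : pword X).
Hypothesis Hw : is_param_word w.
Variable V : X -> nat.
Hypothesis HV : is_Vw w V.

Notation dl q q' := (odelta A (q, q')).
Notation inT q q' := ((q, q') \in otrans A).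
Notation NS := (NS Q X).
Notation enc := (@enc Q X).
Notation dec := (@dec Q X).
Notation sC := (@sC Q X).
Notation sEq := (@sEq Q X).
Notation sGe := (@sGe Q X).
Notation sTr := (@sTr Q X).
Notation at_ := (@at_ Q X).
Notation tpart := (@tpart Q X).
Notation T := (TA A q0 F).

Lemma InSeq_labels l : InSeq l (labels X).
Proof.
case: l => [[x|]|]; rewrite /labels /=; try by [left | right; left].
right; right; apply/InSeq_map; exists x; split => //; apply/InSeq_mem; exact: mem_enum.
Qed.

Lemma delta_spec t : InSeq t (a_delta T) <-> exists i l, t = (i, l, fmlS A F (dec i) l).
Proof.
rewrite /= /delta InSeq_flatten; split.
- case=> s [/InSeq_map [i [_ <-]] /InSeq_map [l [_ <-]]]; by exists i, l.
- case=> i [l ->]; exists [seq (i, l0, fmlS A F (dec i) l0) | l0 <- labels X]; split.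
  + apply/InSeq_map; exists i; split => //; apply/InSeq_mem; exact: mem_enum.
  + apply/InSeq_map; exists l; split => //; exact: InSeq_labels.
Qed.

Lemma rule_spec (R : 'I_NS -> nat -> Prop) i m :
  Rule T w R i m <-> (m = 0 -> dsat R m (fmlS A F (dec i) (@TFirst X))) /\ dsat R m (fmlS A F (dec i) (TLetter (w m))).
Proof.
rewrite /Rule; split.
- move=> H; split.
  + move=> hm; have := H (i, @TFirst X, fmlS A F (dec i) (@TFirst X)). move=> HH. apply: HH => //; apply/delta_spec; by exists i, (@TFirst X).
  + apply: (H (i, TLetter (w m), fmlS A F (dec i) (TLetter (w m)))) => //; apply/delta_spec; by exists i, (TLetter (w m)).
- move=> [h1 h2] t /delta_spec [i' [l ->]] /= ->; case: l => [a|] /=; first by move=> <-.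
  by move=> hm; apply: h1.
Qed.

Lemma dsat_bigAndF (I : finType) (R : 'I_NS -> nat -> Prop) m (g : I -> bform 'I_NS) :
  dsat R m (bigAndF g) <-> exists i, dsat R m (g i).
Proof.
rewrite /bigAndF; have : forall s : seq I, dsat R m (foldr (@BAnd _) (@BTrue _) [seq g i | i <- s]) <-> exists i, i \in s /\ dsat R m (g i).
  elim=> [|j s IH] /=; first by split => // [[i []]].
  rewrite IH; split.
  - case=> [h|[i [h1 h2]]]; [by exists j; rewrite mem_head | by exists i; rewrite inE h1 orbT].
  - case=> i; rewrite inE => [[/orP [/eqP ->|h1] h2]]; [by left | by right; exists i].
move=> H; split.
- by move/H => [i [_ h]]; exists i.
- by case=> i h; apply/H; exists i; rewrite mem_enum.
Qed.

Definition WitK (k : K Q) c : Prop :=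
  match k with
  | inl (inl q) => WR A F V q c
  | inl (inr (q, p, f, b)) => WU A F V b q p f c
  | inr (q, p, f) => WM A F V q p f c
  end.

Definition SemS (s : S Q X) m : Prop :=
  match s with
  | inl (inl (k, md)) => WitK k (if md then lvlR w m else nboxes w m)
  | inl (inr (inl x)) => SemEq w x m
  | inl (inr (inr x)) => SemGe w x m
  | inr _ => False
  end.

Definition Sem (i : 'I_NS) m := SemS (dec i) m.
Lemma Sem_enc s m : Sem (enc s) m = SemS s m.
Proof. by rewrite /Sem decK. Qed.

Definition scanner (R : 'I_NS -> nat -> Prop) :=
  (forall x n, R (enc (sEq x)) n <-> SemEq w x n) /\ (forall x n, R (enc (sGe x)) n <-> SemGe w x n).

Lemma scanner_Sem : scanner Sem.
Proof. by split => x n; rewrite Sem_enc. Qed.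

Lemma tpart_spec R m q q' : w m = None -> scanner R -> inT q q' -> stay_allowed (m == 0) (dl q q') ->
  (dsat R m (tpart (dl q q')) <-> ostep A V (q, nboxes w m) (q', nboxes w m)).
Proof.
move=> hm [sE sG] hT; rewrite /ostep /= hT.
case: (dl q q') => [[]| |x|x] //= hs.
- move/eqP: hs => ->; rewrite nboxes0; by split => [_|].
- split.
  + move=> h; have := h m.+1 erefl; move/sE/(testEq Hw HV x hm) => e; by split => //; split => //; rewrite e.
  + case=> _ [e _] n ->; apply/sE/(testEq Hw HV x hm); by rewrite e.
- split.
  + move=> h; split => //; split => //; apply/(testGe Hw HV x hm).
    case: h => h; [left; apply/sE; exact: h | right; apply/sG; exact: h].
  + case=> _ [/(testGe Hw HV x hm) [h|h] _]; [left => n ->; apply/sE | right => n ->; apply/sG] => //.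
Qed.

Lemma step_inc_iff q q' c : ostep A V (q, c) (q', c.+1) <-> inT q q' /\ isInc (dl q q').
Proof.
rewrite /ostep /=; split.
- case=> ->; case: (dl q q') => [[]| |x|x] //=; lia.
- case=> ->; case: (dl q q') => [[]| |x|x] //= _; lia.
Qed.

Lemma step_dec_iff q q' c : ostep A V (q, c.+1) (q', c) <-> inT q q' /\ isDec (dl q q').
Proof.
rewrite /ostep /=; split.
- case=> ->; case: (dl q q') => [[]| |x|x] //=; lia.
- case=> ->; case: (dl q q') => [[]| |x|x] //= _; lia.
Qed.

Lemma step_stay_allowed q q' m : w m = None -> ostep A V (q, nboxes w m) (q', nboxes w m) ->
  inT q q' /\ stay_allowed (m == 0) (dl q q') /\ ~~ isInc (dl q q') /\ ~~ isDec (dl q q').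
Proof.
move=> hm; rewrite /ostep /=; case=> ->; case: (dl q q') => [[]| |x|x] //=; try lia.
by case=> /(box_level0 hm) ->.
Qed.

Lemma box_closure k m : w m = None -> dsat Sem m (BoxF A F k (m == 0)) -> WitK k (nboxes w m).
Proof.
move=> hm; have sc := scanner_Sem.
have lv : lvlR w m = nboxes w m by rewrite lvlR_none.
have lvS : lvlR w m.+1 = (nboxes w m).+1 by rewrite lvlR_succ.
case: k => [[q|[[[q p] f] b]]|[[q p] f]] /=.
- case=> [h|[h|h]].
  + have := h m erefl; rewrite Sem_enc /= lv => hu; exact: WR_U hu.
  + have := h m erefl; rewrite Sem_enc /= lv => hu; exact: WR_M hu.
  + move/dsat_bigAndF: h => [q' /=]; case: ifP => // hT.
    case: ifP => hi.
    * move=> h; have := h m.+1 erefl; rewrite Sem_enc /= lvS => hw; apply: (WR_step _ hw).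
      by apply/step_inc_iff; rewrite hT hi.
    * case: ifP => hd.
      - case: ifP => hz // h.
        have hpos : 0 < m by rewrite lt0n hz.
        have := h m.-1 (prednK hpos); rewrite Sem_enc /= => hw.
        rewrite (nboxes_pred hm hpos); apply: (WR_step _ hw).
        by apply/step_dec_iff; rewrite hT hd.
      - case: ifP => hs // [ht ha].
        have := ha m erefl; rewrite Sem_enc /= lv => hw; apply: (WR_step _ hw).
        exact: (tpart_spec hm sc hT hs).1 ht.
- case=> [h|[h|h]].
  + move: h; rewrite /Ue; case: ifP => // /andP [/eqP <- /negbTE ->] _; exact: WU_e.
  + move/dsat_bigAndF: h => [[q' f'] /=]; case: ifP => // /and4P [hT hs hb hf] [ht ha].
    have := ha m erefl; rewrite Sem_enc /= lv => hw.
    exact: (WU_s ((tpart_spec hm sc hT hs).1 ht) hb hf hw).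
  + move/dsat_bigAndF: h => [[[[[q1 q2] q3] f1] f2] /=]; case: ifP => // /and5P [a1 a2 a3 a4 a5] [h1 h2].
    have := h1 m.+1 erefl; rewrite Sem_enc /= lvS => w1.
    have := h2 m erefl; rewrite Sem_enc /= lv => w2.
    exact: (WU_u (proj2 (step_inc_iff _ _ _) (conj a1 a2)) (proj2 (step_dec_iff _ _ _) (conj a3 a4)) a5 w1 w2).
- case=> [h|[h|[h|h]]].
  + move: h; rewrite /Ue; case: ifP => // /andP [/eqP <- /negbTE ->] _; exact: WM_e.
  + move/dsat_bigAndF: h => [[q' f'] /=]; case: ifP => // /and4P [hT hs hb hf] [ht ha].
    have := ha m erefl; rewrite Sem_enc /= lv => hw.
    exact: (WM_s ((tpart_spec hm sc hT hs).1 ht) hb hf hw).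
  + move/dsat_bigAndF: h => [[[[[q1 q2] q3] f1] f2] /=]; case: ifP => // /and5P [a1 a2 a3 a4 a5] [h1 h2].
    have := h1 m.+1 erefl; rewrite Sem_enc /= lvS => w1.
    have := h2 m erefl; rewrite Sem_enc /= lv => w2.
    exact: (WM_u (proj2 (step_inc_iff _ _ _) (conj a1 a2)) (proj2 (step_dec_iff _ _ _) (conj a3 a4)) a5 w1 w2).
  + move/dsat_bigAndF: h => [[q1 f1] /=]; case: ifP => // /and3P [a1 a2 a3] h.
    have := h m.+1 erefl; rewrite Sem_enc /= lvS => w1.
    exact: (WM_v (proj2 (step_inc_iff _ _ _) (conj a1 a2)) a3 w1).
Qed.

Lemma Sem_closure i m : Rule T w Sem i m -> Sem i m.
Proof.
move/rule_spec => [h1 h2]; rewrite /Sem; move: h1 h2.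
case: (dec i) => [[[k md]|[x|x]]|[]] /= h1.
- case E: (w m) => [y|] h2.
  + case: md h2 => h2 /=.
    * have := h2 m.+1 erefl; rewrite Sem_enc /=; by rewrite (lvlR_some E).
    * have hpos := some_pos Hw E.
      have := h2 m.-1 (prednK hpos); rewrite Sem_enc /=; by rewrite (nboxes_pred_some Hw E).
  + rewrite lvlR_none // (_ : (if md then nboxes w m else nboxes w m) = nboxes w m); last by case: md.
    case: (posnP m) => hm0.
    * apply: box_closure => //; move: (h1 hm0); by rewrite hm0.
    * case: h2 => [hl|hr].
      - by have := hl m.-1 (prednK hm0); rewrite Sem_enc.
      - apply: box_closure => //; by rewrite (negbTE (lt0n_neq0 hm0)).
- case E: (w m) => [y|] //= h2.
  case: eqP h2 => [e _|hne h2].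
  + exists m; split => //; first by rewrite E e.
    move=> j; rewrite -eqn_leq => /eqP <-; by rewrite E.
  + have := h2 m.+1 erefl; rewrite Sem_enc /= => [[i0 [a b c]]].
    exists i0; split => //; first exact: ltnW.
    move=> j /andP [hj1 hj2]; case: (ltngtP j m) => hjm; [lia | | by rewrite hjm E].
    apply: c; by rewrite hjm hj2.
- case: (posnP m) => hm0; first by have := h1 hm0.
  have hl : (forall n, n.+1 = m -> SemGe w x n) -> SemGe w x m.
    move=> h; have [i0 [a b]] := h m.-1 (prednK hm0); exists i0; split => //; lia.
  case E: (w m) => [y|] //= h2.
  + case: eqP h2 => [e _|hne h2]; first by exists m; rewrite E e.
    apply: hl => n hn; have := h2 n hn; by rewrite Sem_enc.
  + apply: hl => n hn; have := h2 n hn; by rewrite Sem_enc.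
- by case: (w m).
Qed.

Lemma Bad_Sem i m : Bad T w i m -> Sem i m.
Proof. move=> B; apply: (Bad_ind _ B) => s n; exact: Sem_closure. Qed.

Lemma eq_bad x m : SemEq w x m -> Bad T w (enc (sEq x)) m.
Proof.
case=> i [h1 h2 h3].
suff H : forall d m', i - m' = d -> m' <= i -> (forall j, m' <= j <= i -> w j <> None) -> Bad T w (enc (sEq x)) m'.
  exact: H erefl h1 h3.
elim=> [|d IH] m' hd hm' h3'; apply: Bad_fold; apply/rule_spec; rewrite decK /=; split => //.
- have -> : m' = i by lia. by rewrite h2 /= eqxx.
- case E: (w m') => [y|]; last by have := h3' m'; rewrite leqnn hm' E => /(_ erefl).
  case: eqP => // hne /= n ->.
  have hlt : m' < i.
    case: (ltngtP m' i) => h; [done | lia | ].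
    by move: E; rewrite h h2 => -[e]; case: hne; rewrite e.
  have h3'' : forall j, m'.+1 <= j <= i -> w j <> None.
    move=> j /andP [a b]; apply: h3'; rewrite b andbT; exact: ltnW.
  exact: (IH m'.+1 ltac:(lia) hlt h3'').
Qed.

Lemma ge_bad x m : SemGe w x m -> Bad T w (enc (sGe x)) m.
Proof.
case=> i [h1 h2].
suff H : forall d m', m' - i = d -> i <= m' -> Bad T w (enc (sGe x)) m' by exact: H erefl h1.
elim=> [|d IH] m' hd hm'; apply: Bad_fold; apply/rule_spec; rewrite decK /=; split.
- move=> e; move: h2; have -> : i = 0 by lia. by rewrite (w0 Hw).
- have -> : m' = i by lia. by rewrite h2 /= eqxx.
- move=> e; lia.
- have hl : dsat (Bad T w) m' (at_ (sGe x) DLeft).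
    move=> n /= hn; apply: IH; lia.
  case: (w m') => [y|] //=; case: eqP => //.
Qed.

Lemma scanner_Bad : scanner (Bad T w).
Proof.
split => x n; split.
- by move/Bad_Sem; rewrite Sem_enc.
- exact: eq_bad.
- by move/Bad_Sem; rewrite Sem_enc.
- exact: ge_bad.
Qed.

Definition BadK k c := forall m, (lvlR w m = c -> Bad T w (enc (sC k true)) m) /\ (nboxes w m = c -> Bad T w (enc (sC k false)) m).

Lemma BadK_of_box k c : (forall m, w m = None -> nboxes w m = c -> dsat (Bad T w) m (BoxF A F k (m == 0))) -> BadK k c.
Proof.
move=> H.
have box : forall md m, w m = None -> nboxes w m = c -> Bad T w (enc (sC k md)) m.
  move=> md m hm hc; apply: Bad_fold; apply/rule_spec; rewrite decK hm /=; split.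
  - move=> hm0; move: (H m hm hc); by rewrite hm0.
  - case: (posnP m) => hm0; first by left => n; rewrite hm0.
    right; have := H m hm hc; by rewrite (negbTE (lt0n_neq0 hm0)).
move=> m; split.
- have [n [hmn hn]] := next_box Hw m.
  suff HH : forall d m', n - m' = d -> m' <= n -> lvlR w m' = c -> Bad T w (enc (sC k true)) m' by exact: HH erefl hmn.
  elim=> [|d IH] m' hd hmn' hl.
  + have e : m' = n by lia. rewrite e; apply: box => //; by rewrite -lvlR_none // -e.
  + case E: (w m') => [y|]; last by apply: box => //; rewrite -lvlR_none.
    apply: Bad_fold; apply/rule_spec; rewrite decK E /=; split.
    * move=> e; move: E; by rewrite e (w0 Hw).
    * move=> n' ->; apply: IH; [lia | lia | by rewrite (lvlR_some E)].
- elim: m => [|m IH] hl; first by apply: box; [exact: w0 Hw | ].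
  case E: (w m.+1) => [y|]; last by apply: box.
  apply: Bad_fold; apply/rule_spec; rewrite decK E /=; split => // n [->]; apply: IH.
  by rewrite -(nboxes_some E).
Qed.

Lemma WU_bad b q p f c : WU A F V b q p f c -> BadK (kU q p f b) c.
Proof.
elim=> {q p f c}.
- move=> q c; apply: BadK_of_box => m hm hc /=; left; by rewrite /Ue eqxx.
- move=> q q' p f f' c hs hb hf _ IH; apply: BadK_of_box => m hm hc /=; right; left.
  apply/dsat_bigAndF; exists (q', f') => /=.
  rewrite -hc in hs; have [hT [hsa _]] := step_stay_allowed hm hs.
  rewrite hT hsa hb hf /=; split; first exact: (tpart_spec hm scanner_Bad hT hsa).2 hs.
  move=> n ->; apply: (IH m).1; by rewrite lvlR_none.
- move=> q q1 q2 q3 p f f1 f2 c hs1 hs2 hf _ IH1 _ IH2; apply: BadK_of_box => m hm hc /=; right; right.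
  apply/dsat_bigAndF; exists (q1, q2, q3, f1, f2) => /=.
  have [a1 a2] := (step_inc_iff _ _ _).1 hs1; have [a3 a4] := (step_dec_iff _ _ _).1 hs2.
  rewrite a1 a2 a3 a4 hf /=.
  split => n ->.
  + apply: (IH1 m.+1).1; by rewrite lvlR_succ // hc.
  + apply: (IH2 m).1; by rewrite lvlR_none.
Qed.

Lemma WM_bad q p f c : WM A F V q p f c -> BadK (kM q p f) c.
Proof.
elim=> {q p f c}.
- move=> q c; apply: BadK_of_box => m hm hc /=; left; by rewrite /Ue eqxx.
- move=> q q' p f f' c hs hb hf _ IH; apply: BadK_of_box => m hm hc /=; right; left.
  apply/dsat_bigAndF; exists (q', f') => /=.
  rewrite -hc in hs; have [hT [hsa _]] := step_stay_allowed hm hs.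
  rewrite hT hsa hb hf /=; split; first exact: (tpart_spec hm scanner_Bad hT hsa).2 hs.
  move=> n ->; apply: (IH m).1; by rewrite lvlR_none.
- move=> q q1 q2 q3 p f f1 f2 c hs1 hs2 hf hu _ IH2; apply: BadK_of_box => m hm hc /=; right; right; left.
  have IH1 := WU_bad hu.
  apply/dsat_bigAndF; exists (q1, q2, q3, f1, f2) => /=.
  have [a1 a2] := (step_inc_iff _ _ _).1 hs1; have [a3 a4] := (step_dec_iff _ _ _).1 hs2.
  rewrite a1 a2 a3 a4 hf /=.
  split => n ->.
  + apply: (IH1 m.+1).1; by rewrite lvlR_succ // hc.
  + apply: (IH2 m).1; by rewrite lvlR_none.
- move=> q q1 p f f1 c hs hf _ IH; apply: BadK_of_box => m hm hc /=; right; right; right.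
  apply/dsat_bigAndF; exists (q1, f1) => /=.
  have [a1 a2] := (step_inc_iff _ _ _).1 hs.
  rewrite a1 a2 hf /= => n ->; apply: (IH m.+1).1; by rewrite lvlR_succ // hc.
Qed.

Lemma WR_bad q c : WR A F V q c -> BadK (kR q) c.
Proof.
elim=> {q c}.
- move=> q c hu; have IH := WU_bad hu; apply: BadK_of_box => m hm hc /=; left => n ->.
  apply: (IH m).1; by rewrite lvlR_none.
- move=> q c hu; have IH := WM_bad hu; apply: BadK_of_box => m hm hc /=; right; left => n ->.
  apply: (IH m).1; by rewrite lvlR_none.
- move=> q q' c c' hs _ IH; apply: BadK_of_box => m hm hc /=; right; right.
  apply/dsat_bigAndF; exists q' => /=.
  have hT : inT q q' by case: hs.
  rewrite hT; case: (step_lvl hs) => e.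
  + subst c'; rewrite -hc in hs; have [_ [hsa [hi hd]]] := step_stay_allowed hm hs.
    rewrite (negbTE hi) (negbTE hd) hsa; split; first exact: (tpart_spec hm scanner_Bad hT hsa).2 hs.
    move=> n ->; apply: (IH m).1; by rewrite lvlR_none.
  + subst c'; have [_ a2] := (step_inc_iff _ _ _).1 hs; rewrite a2 => n ->.
    apply: (IH m.+1).1; by rewrite lvlR_succ // hc.
  + move: hs; rewrite e => hs; have [_ a2] := (step_dec_iff _ _ _).1 hs.
    have hpos : 0 < m.
      case: (posnP m) => // hm0; exfalso; move: hc e; rewrite hm0 nboxes0; lia.
    have -> : isInc (dl q q') = false by move: a2; case: (dl q q') => [[]| |x|x].
    rewrite a2 (negbTE (lt0n_neq0 hpos)) => n hn.
    apply: (IH n).2; move: hc; rewrite (nboxes_pred hm hpos) -hn /=; lia.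
Qed.

Lemma Bad_iff_WR : Bad T w (enc (sC (kR q0) true)) 0 <-> WR A F V q0 0.
Proof.
split.
- move/Bad_Sem; by rewrite Sem_enc /= lvlR_none ?(w0 Hw) // nboxes0.
- move/WR_bad => H; apply: (H 0).1; by rewrite lvlR_none ?(w0 Hw) // nboxes0.
Qed.

End Sem.

End Aut.
Import Aut.


Section Size.
Variables (Q X : finType) (A : ocapt Q X) (q0 : Q) (F : {set Q}).
Notation NS := (NS Q X).

Lemma size_bigAndF (I : finType) (g : I -> bform 'I_NS) b :
  (forall i, bform_size (g i) <= b) -> bform_size (bigAndF g) <= #|I| * b.+1 + 1.
Proof.
move=> H; rewrite /bigAndF cardE; elim: (enum I) => [|j s IH] //=.
have := H j; rewrite mulSn; lia.
Qed.

Lemma size_BAnd (f g : bform 'I_NS) : bform_size (BAnd f g) = (bform_size f + bform_size g).+1.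
Proof. by []. Qed.

Lemma size_at (s : S Q X) d : bform_size (at_ s d) = 1.
Proof. by []. Qed.

Lemma size_tpart (o : op X) : bform_size (tpart Q o) <= 3.
Proof. by case: o. Qed.

Lemma size_BoxF k z : bform_size (BoxF A F k z) <= 16 * #|Q| ^ 3 + 16 * #|Q| + 7.
Proof.
have hst : forall (f : Q * bool -> bool) (g : Q * bool -> bform 'I_NS),
  (forall t, bform_size (g t) <= 5) -> bform_size (bigAndF (fun t => if f t then g t else BTrue _)) <= 12 * #|Q| + 1.
  move=> f g hg; apply: leq_trans (size_bigAndF (b := 5) _) _.
  - move=> t; case: (f t) => //; exact: hg.
  - rewrite card_prod card_bool; lia.
have hup : forall (g : Q * Q * Q * bool * bool -> bform 'I_NS),
  (forall t, bform_size (g t) <= 3) -> bform_size (bigAndF g) <= 16 * #|Q| ^ 3 + 1.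
  move=> g hg; apply: leq_trans (size_bigAndF (b := 3) hg) _.
  rewrite !card_prod card_bool; lia.
case: k => [[q|[[[q p] f] b]]|[[q p] f]]; cbn [BoxF]; rewrite !size_BAnd ?size_at.
- have : bform_size (RstepF A z q) <= 6 * #|Q| + 1.
    apply: leq_trans (size_bigAndF (b := 5) _) _; last lia.
    move=> q' /=; case: ifP => // _; case: ifP => // _; case: ifP => [_|_]; first by case: z.
    case: ifP => // _ /=; have := size_tpart (odelta A (q, q')); lia.
  lia.
- have h1 : bform_size (@Ue Q X q p f) <= 1 by rewrite /Ue; case: ifP.
  have h2 : bform_size (UstayF A F z q p f b) <= 12 * #|Q| + 1.
    apply: hst => t /=; have := size_tpart (odelta A (q, t.1)); lia.
  have h3 : bform_size (UupF A F q p f b) <= 16 * #|Q| ^ 3 + 1.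
    apply: hup => [[[[[q1 q2] q3] f1] f2]] /=; by case: ifP.
  lia.
- have h1 : bform_size (@Ue Q X q p f) <= 1 by rewrite /Ue; case: ifP.
  have h2 : bform_size (MstayF A F z q p f) <= 12 * #|Q| + 1.
    apply: hst => t /=; have := size_tpart (odelta A (q, t.1)); lia.
  have h3 : bform_size (MupF A F q p f) <= 16 * #|Q| ^ 3 + 1.
    apply: hup => [[[[[q1 q2] q3] f1] f2]] /=; by case: ifP.
  have h4 : bform_size (MvF A F q p f) <= 4 * #|Q| + 1.
    apply: leq_trans (size_bigAndF (b := 1) _) _; last by rewrite card_prod card_bool; lia.
    move=> t /=; by case: ifP.
  lia.
Qed.

Lemma size_fmlS s l : bform_size (fmlS A F s l) <= 16 * #|Q| ^ 3 + 16 * #|Q| + 9.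
Proof.
case: s => [[[k md]|[x|x]]|[]]; case: l => [[y|]|]; cbn [fmlS]; rewrite ?size_BAnd ?size_at.
all: try (case: md; rewrite ?size_at; lia).
all: try (have := size_BoxF k false; lia).
all: try (have := size_BoxF k true; lia).
all: try (case: ifP => _; rewrite ?size_at /=; lia).
all: try (rewrite /=; lia).
Qed.

Lemma sum_bound (s : seq ('I_NS * tlabel X * bform 'I_NS)) B :
  (forall t, InSeq t s -> bform_size t.2 <= B) -> \sum_(t <- s) (bform_size t.2).+1 <= size s * B.+1.
Proof.
elim: s => [|t s IH] H; first by rewrite big_nil.
rewrite big_cons /= mulSn; apply: leq_add; first by rewrite ltnS; apply: H; left.
apply: IH => t' ht'; apply: H; by right.
Qed.

Lemma size_delta : size (delta A F) = NS * #|X|.+2.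
Proof.
rewrite /delta; have : forall s : seq 'I_NS, size (flatten [seq [seq (i, l, fmlS A F (dec i) l) | l <- labels X] | i <- s]) = size s * #|X|.+2.
  elim=> [|i s IH] //=; rewrite size_cat size_map IH /labels /= size_map -cardE mulSn //.
by move=> ->; rewrite size_enum_ord.
Qed.

Lemma NS_val : NS = (#|Q| + #|Q| * #|Q| * 2 * 2 + #|Q| * #|Q| * 2) * 2 + (#|X| + #|X|) + 1.
Proof. by rewrite /Aut.NS /S /K !card_sum !card_prod !card_sum !card_prod card_bool card_unit. Qed.

Lemma a2a_size_bound : a2a_size (TA A q0 F) <= NS + NS * #|X|.+2 * (16 * #|Q| ^ 3 + 16 * #|Q| + 10).
Proof.
rewrite /a2a_size card_ord leq_add2l -size_delta.
apply: leq_trans (sum_bound (B := 16 * #|Q| ^ 3 + 16 * #|Q| + 9) _) _; last by apply: leq_mul => //; rewrite -addnS.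
move=> t /delta_spec [i [l ->]] /=; exact: size_fmlS.
Qed.

End Size.

Theorem proposition21 :
  exists c : nat,
  forall (Q X : finType) (A : ocapt Q X) (q0 : Q) (F : {set Q}),
  exists (n : nat) (T : a2a 'I_n X),
    a2a_size T <= c * (ocapt_size A) ^ c /\
    forall w : pword X, is_param_word w ->
      forall V : X -> nat, is_Vw w V ->
        (a2a_accepts T w <->
         forall r, inf_run A V q0 r -> visits_finitely F r).
Proof.
exists 3000 => Q X A q0 F; exists (Aut.NS Q X), (TA A q0 F); split.
- apply: leq_trans (a2a_size_bound A q0 F) _.
  rewrite NS_val /ocapt_size.
  set q := #|Q|; set x := #|X|; set N := q + #|otrans A| + x.
  have hq1 : 0 < q by rewrite /q; apply/card_gt0P; exists q0.
  have hqN : q <= N by rewrite /N -addnA leq_addr.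
  have hxN : x <= N by rewrite /N leq_addl.
  have hN1 : 0 < N by exact: leq_trans hq1 hqN.
  have hq2 : q * q <= N * N by exact: leq_mul.
  have hq3 : q ^ 3 <= N * N * N by rewrite (_ : q ^ 3 = q * q * q) ?leq_mul // expnS expnS expn1 mulnA.
  have hNN : N <= N * N by rewrite -{1}(muln1 N) leq_mul.
  have hNNN : N * N <= N * N * N by rewrite -{1}(muln1 (N * N)) leq_mul.
  have ha : (q + q * q * 2 * 2 + q * q * 2) * 2 + (x + x) + 1 <= 17 * (N * N) by lia.
  have hb : x.+2 <= 3 * N by lia.
  have hd : 16 * q ^ 3 + 16 * q + 10 <= 42 * (N * N * N) by lia.
  have hprod := leq_mul (leq_mul ha hb) hd.
  have e6 : 17 * (N * N) * (3 * N) * (42 * (N * N * N)) = 2142 * N ^ 6.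
    rewrite !expnS expn0; lia.
  have h6 : N * N <= N ^ 6 by rewrite mulnn (leq_pexp2l hN1).
  have h3000 : N ^ 6 <= N ^ 3000 by rewrite (leq_pexp2l hN1).
  rewrite e6 in hprod.
  move: ha hprod h6 h3000; move: (N ^ 6) (N ^ 3000) => N6 N3000; lia.
- move=> w Hw V HV.
  have GA := @generic_accepts _ _ (TA A q0 F) w erefl. apply: (iff_trans GA); rewrite /Good.
  have -> : a_init (TA A q0 F) = @enc Q X (@sC Q X (kR q0) true) by [].
  apply: (iff_trans (not_iff_compat (Bad_iff_WR A q0 F Hw HV))); split.
  + move=> hno r hr; apply: NNPP => hvf; apply: hno; apply: (buchi_WR (r := r)) => //.
    move=> N; apply: NNPP => h; apply: hvf; exists N => i hi; apply/negP => hF; apply: h; by exists i.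
  + move=> H /WR_run [r [hr hinf]]; have [N HN] := H r hr.
    have [i [hi hF]] := hinf N; by move: (HN i hi); rewrite hF.
Qed.
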